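(* For every surjective $\boxplus$-morphism $\phi:[1]^{m+n+1}\to[1]^{n+1}$ there exist monotone functions $\phi_i:[1]^{k_i}\to[1]$, $1\leq i\leq n+1$, with $k_1+\cdots+k_{n+1}=m+n+1$, and a coordinate permutation $g$ of $[1]^{m+n+1}$ such that $\phi=(\phi_1\times\phi_2\times\cdots\times\phi_{n+1})\circ g$.
   Context: $[1]=\{0<1\}$, $[1]^n$ the product poset ($[1]^0=[0]$). An interval in a poset is a non-empty subset $[x,z]=\{y:x\leq y\leq z\}$. $\boxplus$ is the category whose objects are the $[1]^n$ ($n\geq0$) and whose morphisms are the monotone functions mapping every interval onto an interval. $\phi_1\times\cdots\times\phi_{n+1}:[1]^{k_1+\cdots+k_{n+1}}\to[1]^{n+1}$ is the Cartesian product of functions. *)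

(* Defs.v *)
From mathcomp Require Import all_boot all_order. From mathcomp Require Import fingroup perm.
Set Implicit Arguments. Unset Strict Implicit. Unset Printing Implicit Defensive.

(* The poset [1]^n is modelled as {ffun 'I_n -> bool} (false = 0 < true = 1),
   ordered coordinatewise. [1]^0 = 'I_0 -> bool has exactly one point. *)
Definition cube (n : nat) := {ffun 'I_n -> bool}.

Definition cle (n : nat) (x y : cube n) : Prop := forall i, x i <= y i.

Definition monotone_cube (n p : nat) (f : cube n -> cube p) : Prop :=
  forall x y, cle x y -> cle (f x) (f y).

Definition monotone_bit (n : nat) (f : cube n -> bool) : Prop :=
  forall x y, cle x y -> f x <= f y.

Definition in_interval (n : nat) (a b y : cube n) : Prop := cle a y /\ cle y b.

Definition box_morphism (n p : nat) (f : cube n -> cube p) : Prop :=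
  monotone_cube f /\
  forall x z, cle x z ->
    exists a b, cle a b /\
      forall y, (exists w, in_interval x z w /\ f w = y) <-> in_interval a b y.

(* nat-indexed access to coordinates (default false outside the range) *)
Definition getn (N : nat) (x : cube N) (p : nat) : bool :=
  match @insub nat (fun q => q < N) 'I_N p with Some i => x i | None => false end.

Definition offset (r : nat) (k : 'I_r -> nat) (i : 'I_r) : nat :=
  \sum_(j < r | (j < i)%N) k j.

Definition block (N r : nat) (k : 'I_r -> nat) (i : 'I_r) (x : cube N) : cube (k i) :=
  [ffun j : 'I_(k i) => getn x (offset k i + j)].

(* Cartesian product phi_1 x ... x phi_r : [1]^(k_1+...+k_r) -> [1]^r
   (used when \sum_i k i = N) *)
Definition cprod (N r : nat) (k : 'I_r -> nat)
    (phis : forall i : 'I_r, cube (k i) -> bool) (x : cube N) : cube r :=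
  [ffun i => phis i (block k i x)].

Definition coord_perm (N : nat) (s : {perm 'I_N}) (x : cube N) : cube N :=
  [ffun j => x (s j)].

(* Main.v *)
Require Import Defs.
From mathcomp Require Import all_boot all_order. From mathcomp Require Import fingroup perm.
Set Implicit Arguments. Unset Strict Implicit. Unset Printing Implicit Defensive.

Definition setb N (x : cube N) (c : 'I_N) (b : bool) : cube N :=
  [ffun i => if i == c then b else x i].

Lemma setbE N (x : cube N) c b i : setb x c b i = if i == c then b else x i.
Proof. by rewrite ffunE. Qed.

Lemma setb_id N (x : cube N) c : setb x c (x c) = x.
Proof. by apply/ffunP=> i; rewrite setbE; case: eqP => // ->. Qed.

Lemma setbK N (x : cube N) c b b' : setb (setb x c b) c b' = setb x c b'.
Proof. by apply/ffunP=> i; rewrite !setbE; case: eqP. Qed.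

Lemma setb_c N (x : cube N) c b : setb x c b c = b.
Proof. by rewrite setbE eqxx. Qed.

Definition dist N (x y : cube N) := #|[pred i | x i != y i]|.

Lemma between_dist N (w p q : cube N) :
  (forall i, (w i == p i) || (w i == q i)) -> w != p -> dist w q < dist p q.
Proof.
move=> Hb Hne; apply: proper_card; apply/properP; split.
  apply/subsetP=> i; rewrite !inE; move: (Hb i).
  by case: (w i); case: (p i); case: (q i).
have [i Hi] : exists i, w i != p i.
  apply/existsP; apply: contraR Hne; rewrite negb_exists => /forallP H.
  by apply/eqP/ffunP=> i; move: (H i); rewrite negbK => /eqP.
exists i; rewrite !inE; move: (Hb i) Hi;
  by case: (w i); case: (p i); case: (q i).
Qed.

Lemma interval_img N r (f : cube N -> cube r) : box_morphism f ->
  forall x z y, cle x z -> cle (f x) y -> cle y (f z) ->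
  exists w, [/\ cle x w, cle w z & f w = y].
Proof.
case=> Hm Hi x z y Hxz H1 H2.
have [a [b [Hab H]]] := Hi x z Hxz.
have Ha : cle a (f x).
  have [] : in_interval a b (f x).
    apply/H; exists x; split=> //; split=> // i; exact: leqnn.
  done.
have Hb : cle (f z) b.
  have [] : in_interval a b (f z).
    apply/H; exists z; split=> //; split=> // i; exact: leqnn.
  done.
have : in_interval a b y.
  split=> i; [exact: leq_trans (Ha i) (H1 i) | exact: leq_trans (H2 i) (Hb i)].
by move/H=> [w [[H3 H4] H5]]; exists w.
Qed.

Lemma le_setbT N (x : cube N) c : cle x (setb x c true).
Proof. by move=> i; rewrite setbE; case: eqP => _ //; case: (x i). Qed.

Lemma core_step N r (f : cube N -> cube r) (c : 'I_N) (a b : 'I_r) (p p' : cube N) :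
  box_morphism f -> a != b ->
  (forall w : cube N, (forall i, (w i == p i) || (w i == p' i)) -> w != p -> w c = false ->
     ~~ f w a -> f (setb w c true) a -> False) ->
  p c = false -> p' c = false -> ~~ f p a -> f (setb p c true) a ->
  ~~ f p' b -> f (setb p' c true) b -> False.
Proof.
move=> Hbox Hab IH pc p'c fpa fpca fp'b fp'cb.
have Hm := Hbox.1.
have mono : forall x y i, cle x y -> f x i <= f y i by move=> x y i H; exact: Hm x y H i.
case fpb: (f p b).
-
  pose u : cube N := [ffun i => p i && p' i].
  pose pc1 := setb p c true.
  pose y := setb (f pc1) b false.
  have Hu : cle u pc1.
    move=> i; rewrite /u /pc1 ffunE setbE; case: eqP => _; first by case: (_ && _).
    by case: (p i); case: (p' i).
  have Hup' : cle u p' by move=> i; rewrite ffunE; case: (p i); case: (p' i).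
  have H1 : cle (f u) y.
    move=> i; rewrite /y setbE; case: eqP => [->|_]; last exact: mono.
    by move: (mono _ _ b Hup'); rewrite (negbTE fp'b); case: (f u b).
  have H2 : cle y (f pc1).
    by move=> i; rewrite /y setbE; case: eqP => [->|_] //; case: (f pc1 b).
  have [w [Huw Hwp fw]] := interval_img Hbox Hu H1 H2.
  have fwa : f w a by rewrite fw /y setbE (negbTE Hab).
  case wc: (w c).
  + pose q := setb w c false.
    have qw : setb q c true = w by rewrite /q setbK -wc setb_id.
    have Hqp : cle q p.
      move=> i; rewrite /q setbE; case: eqP => [->|ne] //.
      by move: (Hwp i); rewrite /pc1 setbE; case: eqP.
    apply: (IH q).
    * move=> i; rewrite /q setbE; have [->|ne] := eqVneq i c; first by rewrite ?pc ?eqxx.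
      move: (Huw i) (Hwp i); rewrite /u /pc1 !ffunE (negbTE ne).
      by case: (w i); case: (p i); case: (p' i).
    * apply/negP=> /eqP qp; move: fw; rewrite -qw qp /y => /ffunP/(_ b).
      rewrite setbE eqxx => E.
      by move: (mono _ _ b (le_setbT p c)); rewrite fpb -/pc1 E.
    * by rewrite /q setbE eqxx.
    * by move: (mono _ _ a Hqp); rewrite (negbTE fpa); case: (f q a).
    * by rewrite qw.
  + have Hwp2 : cle w p.
      move=> i; move: (Hwp i); rewrite /pc1 setbE; case: eqP => [->|//].
      by rewrite wc.
    by move: (mono _ _ a Hwp2); rewrite fwa (negbTE fpa).
- pose v : cube N := [ffun i => p i || p' i].
  pose vc := setb v c true.
  pose y := setb (f p) b true.
  have Hpv : cle p vc.
    by move=> i; rewrite /vc /v !ffunE; case: (i == c) => //; case: (p i); case: (p' i).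
  have Hp'v : cle (setb p' c true) vc.
    move=> i; rewrite /vc /v !ffunE; case: (i == c) => //.
    by case: (p i); case: (p' i).
  have H1 : cle (f p) y.
    by move=> i; rewrite /y setbE; case: (i == b) => //; case: (f p i).
  have H2 : cle y (f vc).
    move=> i; rewrite /y setbE; have [->|_] := eqVneq i b; last exact: mono.
    by move: (mono _ _ b Hp'v); rewrite fp'cb.
  have [w [Hpw Hwv fw]] := interval_img Hbox Hpv H1 H2.
  have fwa : f w a = false by rewrite fw /y setbE (negbTE Hab) (negbTE fpa).
  case wc: (w c).
  + have Hpcw : cle (setb p c true) w.
      move=> i; rewrite setbE; have [->|_] := eqVneq i c; first by rewrite wc.
      exact: Hpw.
    by move: (mono _ _ a Hpcw); rewrite fpca fwa.
  + apply: (IH w).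
    * move=> i; move: (Hpw i) (Hwv i); rewrite /vc /v !ffunE.
      have [->|_] := eqVneq i c; first by rewrite wc pc.
      by case: (w i); case: (p i); case: (p' i).
    * apply/negP=> /eqP wp; move: fw; rewrite wp /y => /ffunP/(_ b).
      by rewrite setbE eqxx fpb.
    * done.
    * by rewrite fwa.
    * have Hpcw : cle (setb p c true) (setb w c true).
        move=> i; rewrite !setbE; case: (i == c) => //.
      by move: (mono _ _ a Hpcw); rewrite fpca; case: (f _ a).
Qed.

Lemma core N r (f : cube N -> cube r) (c : 'I_N) (a b : 'I_r) (p' : cube N) :
  box_morphism f -> a != b -> p' c = false -> ~~ f p' b -> f (setb p' c true) b ->
  forall d (p : cube N), dist p p' <= d -> p c = false -> ~~ f p a -> f (setb p c true) a -> False.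
Proof.
move=> Hbox Hab p'c fp'b fp'cb; elim=> [|d IH] p Hd pc fpa fpca;
  apply: (core_step (c:=c) (a:=a) (b:=b) (p:=p) (p':=p') Hbox Hab) => // w Hb Hne wc fwa fwca.
  by have := leq_trans (between_dist Hb Hne) Hd.
by apply: (IH w) => //; rewrite -ltnS; exact: leq_trans (between_dist Hb Hne) Hd.
Qed.

Definition lab N r (f : cube N -> cube r) (a : 'I_r) (c : 'I_N) (p : cube N) : bool :=
  ~~ f (setb p c false) a && f (setb p c true) a.
Definition supp N r (f : cube N -> cube r) (a : 'I_r) (c : 'I_N) : bool :=
  [exists p : cube N, lab f a c p].

Lemma supp_disj N r (f : cube N -> cube r) a b c :
  box_morphism f -> supp f a c -> supp f b c -> a = b.
Proof.
move=> Hbox /existsP[p /andP[H1 H2]] /existsP[p' /andP[H3 H4]].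
apply/eqP; apply/negPn/negP => Hab.
apply: (core (c:=c) (p' := setb p' c false) Hbox Hab _ H3 _ (leqnn _) (p := setb p c false)).
all: first [by rewrite setb_c | by rewrite setbK | done].
Qed.

Lemma nosupp N r (f : cube N -> cube r) a c : box_morphism f -> ~~ supp f a c ->
  forall p b, f (setb p c b) a = f (setb p c false) a.
Proof.
move=> Hbox Hs p b; case: b => //.
have H : ~~ lab f a c p by apply: contra Hs => H; apply/existsP; exists p.
have := Hbox.1 _ _ (le_setbT (setb p c false) c) a; rewrite setbK.
move: H; rewrite /lab; case: (f (setb p c false) a); case: (f (setb p c true) a) => //.
Qed.

Lemma locality N r (f : cube N -> cube r) a : box_morphism f ->
  forall d (x y : cube N), dist x y <= d -> (forall c, supp f a c -> x c = y c) -> f x a = f y a.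
Proof.
move=> Hbox; elim=> [|d IH] x y Hd Hxy.
  have -> : x = y; last by [].
  apply/ffunP=> i; apply/eqP; apply: contraT => Hi.
  have : 0 < dist x y by apply/card_gt0P; exists i; rewrite inE.
  by rewrite lt0n; move: Hd; rewrite leqn0 => ->.
have [Hxy0|[i Hi]] : x = y \/ exists i, x i != y i.
  case: (boolP [exists i, x i != y i]) => [/existsP H|H]; [by right|left].
  apply/ffunP=> i; apply/eqP; move: H; rewrite negb_exists => /forallP/(_ i).
  by rewrite negbK.
  by rewrite Hxy0.
have Hs : ~~ supp f a i by apply: contra Hi => /Hxy ->.
pose x' := setb x i (y i).
have -> : f x a = f x' a.
  by rewrite -{1}(setb_id x i) /x' !(nosupp Hbox Hs).
apply: IH.
  rewrite -ltnS; apply: leq_trans Hd; apply: between_dist.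
    by move=> j; rewrite /x' setbE; have [->|_] := eqVneq j i; rewrite eqxx ?orbT.
  by apply/negP=> /eqP/ffunP/(_ i); rewrite /x' setb_c; apply/eqP; rewrite eq_sym.
move=> j Hj; rewrite /x' setbE; have [->|_] := eqVneq j i; [done | exact: Hxy].
Qed.

Definition kk N r (beta : 'I_N -> 'I_r) (a : 'I_r) : nat := #|[pred c | beta c == a]|.

Lemma sum_kk N r (beta : 'I_N -> 'I_r) : \sum_(a < r) kk beta a = N.
Proof.
rewrite -[RHS](card_ord N) -sum1_card (partition_big beta xpredT) //=.
by apply: eq_bigr => a _; rewrite sum1_card /kk.
Qed.

Lemma off_le r (k : 'I_r -> nat) a : offset k a + k a <= \sum_(j < r) k j.
Proof.
rewrite /offset [X in _ <= X](bigID (fun j : 'I_r => (j < a)%N)) /= leq_add2l.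
by rewrite (bigD1 a) ?ltnn //= leq_addr.
Qed.

Lemma off_mono r (k : 'I_r -> nat) (a a' : 'I_r) : (a < a')%N -> offset k a + k a <= offset k a'.
Proof.
move=> Haa; rewrite /offset [X in _ <= X](bigD1 a) //= addnC leq_add2l.
apply: sub_le_big => [//|x y|j Hj]; first exact: leq_addr.
rewrite (ltn_trans Hj Haa) /=; apply/eqP=> E; move: Hj; rewrite E ltnn.
done.
Qed.

Definition rk N r (beta : 'I_N -> 'I_r) (c : 'I_N) : nat :=
  offset (kk beta) (beta c) + #|[pred c' : 'I_N | (beta c' == beta c) && (c' < c)%N]|.

Lemma rk_lo N r (beta : 'I_N -> 'I_r) c : offset (kk beta) (beta c) <= rk beta c.
Proof. exact: leq_addr. Qed.

Lemma rk_hi N r (beta : 'I_N -> 'I_r) c : rk beta c < offset (kk beta) (beta c) + kk beta (beta c).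
Proof.
rewrite /rk ltn_add2l /kk; apply: proper_card; apply/properP; split.
  by apply/subsetP=> x; rewrite !inE => /andP[].
by exists c; rewrite !inE ?eqxx ?ltnn.
Qed.

Lemma rk_lt N r (beta : 'I_N -> 'I_r) c : rk beta c < N.
Proof.
apply: leq_trans (rk_hi beta c) _; have := off_le (kk beta) (beta c); by rewrite sum_kk.
Qed.

Definition rko N r (beta : 'I_N -> 'I_r) (c : 'I_N) : 'I_N := Ordinal (rk_lt beta c).

Lemma rk_inj N r (beta : 'I_N -> 'I_r) : injective (rko beta).
Proof.
move=> c c' /(congr1 val) /= E.
have H : forall c c' : 'I_N, (beta c < beta c')%N -> rk beta c < rk beta c'.
  move=> x y Hxy; apply: leq_trans (rk_hi beta x) _.
  apply: leq_trans (off_mono (kk beta) Hxy) _; exact: rk_lo.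
have [Hl|Hl|Hb] := ltngtP (beta c) (beta c').
- by move: (H _ _ Hl); rewrite E ltnn.
- by move: (H _ _ Hl); rewrite E ltnn.
have Hb' : beta c = beta c' by apply: val_inj.
have H2 : forall x y : 'I_N, beta x = beta y -> (x < y)%N -> rk beta x < rk beta y.
  move=> x y Exy Hxy; rewrite /rk Exy ltn_add2l; apply: proper_card; apply/properP; split.
    apply/subsetP=> z; rewrite !inE => /andP[-> /= Hz]; exact: ltn_trans Hz Hxy.
  by exists x; rewrite !inE ?Exy ?eqxx ?ltnn //= Hxy.
have [Hl|Hl|Hc] := ltngtP c c'.
- by move: (H2 _ _ Hb' Hl); rewrite E ltnn.
- by move: (H2 _ _ (esym Hb') Hl); rewrite E ltnn.
exact: val_inj.
Qed.

Lemma getn_lt N (x : cube N) p (H : p < N) : getn x p = x (Ordinal H).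
Proof.
rewrite /getn; case: insubP => [u _ Hu|]; last by rewrite H.
by congr (x _); apply: val_inj.
Qed.

Lemma getn_le N (x y : cube N) p : cle x y -> getn x p <= getn y p.
Proof. by move=> H; rewrite /getn; case: insub. Qed.

Theorem mainTheorem9 (m n : nat) (phi : cube (m + n + 1) -> cube (n + 1)) :
  box_morphism phi ->
  (forall y, exists x, phi x = y) ->
  exists (k : 'I_(n + 1) -> nat)
         (phis : forall i : 'I_(n + 1), cube (k i) -> bool)
         (s : {perm 'I_(m + n + 1)}),
    (\sum_(i < n + 1) k i = m + n + 1)%N /\
    (forall i, monotone_bit (phis i)) /\
    (forall x, phi x = @cprod (m + n + 1) (n + 1) k phis (coord_perm s x)).
Proof.
move=> Hbox _.
have d0lt : 0 < n + 1 by rewrite addn1.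
pose d0 : 'I_(n + 1) := Ordinal d0lt.
pose beta (c : 'I_(m + n + 1)) : 'I_(n + 1) := odflt d0 [pick a | supp phi a c].
have beta_supp : forall a c, supp phi a c -> beta c = a.
  move=> a c Hc; rewrite /beta; case: pickP => [a' Ha'|H] /=.
    exact: supp_disj Hbox Ha' Hc.
  by move: (H a); rewrite Hc.
pose k := kk beta.
pose X (a : 'I_(n + 1)) (z : cube (k a)) : cube (m + n + 1) :=
  [ffun c => if beta c == a then getn z (rk beta c - offset k a) else false].
pose phis (a : 'I_(n + 1)) (z : cube (k a)) : bool := phi (X a z) a.
exists k, phis, ((perm (@rk_inj _ _ beta))^-1)%g; split; first exact: sum_kk.
split.
  move=> a z z' H; apply: (Hbox.1 _ _ _ a) => c; rewrite !ffunE.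
  by case: (beta c == a) => //; apply: getn_le.
move=> x; apply/ffunP => a; rewrite /cprod ffunE /phis.
apply: (locality Hbox (leqnn _)) => c Hc.
have Ebc := beta_supp _ _ Hc.
rewrite ffunE Ebc eqxx.
have Ht : rk beta c - offset k a < k a.
  rewrite ltn_subLR; last by rewrite -Ebc; exact: rk_lo.
  by rewrite -Ebc; exact: rk_hi.
rewrite (getn_lt _ Ht) /block ffunE /=.
have Ho : offset k a + (rk beta c - offset k a) = rk beta c.
  by rewrite subnKC // -Ebc; exact: rk_lo.
rewrite Ho (getn_lt _ (rk_lt beta c)) /coord_perm ffunE.
have -> : Ordinal (rk_lt beta c) = perm (@rk_inj _ _ beta) c by rewrite permE.
by rewrite permK.
Qed.
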